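(* Let $\Delta$ be a $d$-dimensional simplicial forest. Then $f_0 \geq f_d$, where $f_i$ denotes the number of $i$-dimensional faces of $\Delta$.
   Context: A simplicial complex $\Delta$ is a collection of subsets (faces) of a finite vertex set closed under taking subsets; facets are maximal faces, $\dim \tau = |\tau|-1$, and $\dim\Delta$ is the maximal dimension of a face. For facets $F_1,\dots,F_s$ write $\Delta=\langle F_1,\dots,F_s\rangle$. A facet $F$ of $\Delta$ is a leaf if either $F$ is the only facet of $\Delta$, or there is a facet $G\neq F$ of $\Delta$ with $F\cap F'\subseteq F\cap G$ for every facet $F'\neq F$ of $\Delta$. $\Delta$ is a simplicial tree if $\Delta$ is connected and every subcomplex of the form $\langle F_{i_1},\dots,F_{i_r}\rangle$ (generated by a nonempty subset of the facets) has a leaf. $\Delta$ is a simplicial forest if every connected component of $\Delta$ is a simplicial tree. *)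

(* Defs.v *)
From mathcomp Require Import all_boot.
Set Implicit Arguments. Unset Strict Implicit. Unset Printing Implicit Defensive.

Definition simplicial_complex (T : finType) (D : {set {set T}}) : Prop :=
  forall F G : {set T}, F \in D -> G \subset F -> G \in D.

Section SC.
Variable T : finType.
Implicit Types (D S : {set {set T}}) (F G : {set T}).

Definition facets D : {set {set T}} :=
  [set F in D | [forall G in D, (F \subset G) ==> (G == F)]].

Definition gen S : {set {set T}} := [set G : {set T} | [exists F in S, G \subset F]].

Definition is_leaf D F : bool :=
  (F \in facets D) &&
  ((facets D == [set F]) ||
   [exists G in facets D, (G != F) &&
      [forall F' in facets D, (F' != F) ==> (F :&: F' \subset F :&: G)]]).

Definition facet_adj D : rel {set T} :=
  [rel A B | [&& A \in facets D, B \in facets D & A :&: B != set0]].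

Definition sc_connected D : Prop :=
  forall F G, F \in facets D -> G \in facets D -> connect (facet_adj D) F G.

Definition simplicial_tree D : Prop :=
  sc_connected D /\
  forall S, S \subset facets D -> S != set0 -> exists F, is_leaf (gen S) F.

Definition component D F : {set {set T}} :=
  gen [set G in facets D | connect (facet_adj D) F G].

Definition simplicial_forest D : Prop :=
  forall F, F \in facets D -> simplicial_tree (component D F).

(* f_i = number of i-dimensional faces (faces with i+1 vertices) *)
Definition fvec D (i : nat) : nat := #|[set F in D | #|F| == i.+1]|.

Definition has_dim D (d : nat) : Prop :=
  (exists2 F, F \in D & #|F| = d.+1) /\ (forall F, F \in D -> #|F| <= d.+1).
End SC.

(* Main.v *)
Require Import Defs.
From mathcomp Require Import all_boot.
Set Implicit Arguments. Unset Strict Implicit.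

Section Aux.
Variable T : finType.
Implicit Types (D S : {set {set T}}) (F G : {set T}).

Lemma facets_gen D S : S \subset facets D -> facets (gen S) = S.
Proof.
move=> sS; apply/setP=> X; rewrite !inE.
apply/andP/idP.
- case=> /existsP[F /andP[FS XF]] /forallP max.
  have Fg : F \in gen S by rewrite inE; apply/existsP; exists F; rewrite FS subxx.
  by have := max F; rewrite Fg XF /= => /eqP <-.
- move=> XS; split.
  + by apply/existsP; exists X; rewrite XS subxx.
  + apply/forallP=> G; apply/implyP; rewrite inE => /existsP[F /andP[FS GF]].
    apply/implyP=> XG.
    have := (subsetP sS) _ XS; rewrite inE => /andP[_ /forallP m].
    have := (subsetP sS) _ FS; rewrite inE => /andP[FD _].
    have := m F; rewrite FD (subset_trans XG GF) /= => /eqP FX.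
    by rewrite eqEsubset XG andbT -FX.
Qed.

Lemma facet_sub_eq D F G : F \in facets D -> G \in facets D -> F \subset G -> F = G.
Proof.
rewrite !inE => /andP[_ /forallP m] /andP[GD _] FG.
by have := m G; rewrite GD FG /= => /eqP.
Qed.

Lemma private_vertex D S :
  simplicial_forest D -> set0 \notin facets D ->
  S \subset facets D -> S != set0 ->
  exists L v, [/\ L \in S, v \in L & forall F', F' \in S -> F' != L -> v \notin F'].
Proof.
move=> forest n0 sS /set0Pn[F FS].
have FF := (subsetP sS) _ FS.
set C := [set G in facets D | connect (facet_adj D) F G].
set S' := S :&: C.
have sC : C \subset facets D by apply/subsetP=> G; rewrite inE => /andP[].
have sS' : S' \subset facets (component D F).
  by rewrite /component (facets_gen sC) subsetIr.
have S'n : S' != set0.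
  by apply/set0Pn; exists F; rewrite in_setI FS /C in_set FF connect0.
have [_ tr] := forest F FF.
have [L] := tr S' sS' S'n.
have sS'D : S' \subset facets D by rewrite (subset_trans (subsetIr _ _)).
rewrite /is_leaf (facets_gen sS'D) => /andP[LS' H].
have LS : L \in S by move: LS'; rewrite inE => /andP[].
have LC : connect (facet_adj D) F L by move: LS'; rewrite !inE => /andP[_ /andP[]].
have LF : L \in facets D := (subsetP sS'D) _ LS'.
have priv' : exists2 v, v \in L & forall F', F' \in S' -> F' != L -> v \notin F'.
  case/orP: H => [/eqP S'1 | /existsP[G /and3P[GS' GL /forallP Hall]]].
  - have : L != set0 by apply: contraNneq n0 => <-.
    case/set0Pn=> v vL; exists v => // F'; rewrite S'1 inE => /eqP ->; by rewrite eqxx.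
  - have GF : G \in facets D := (subsetP sS'D) _ GS'.
    have : ~~ (L \subset G).
      by apply/negP=> LG; move: GL; rewrite (facet_sub_eq LF GF LG) eqxx.
    case/subsetPn=> v vL vG; exists v => // F' F'S' F'L.
    apply/negP=> vF'.
    have := Hall F'; rewrite F'S' F'L /= => /subsetP/(_ v).
    by rewrite !inE vL vF' (negbTE vG) => /(_ isT).
case: priv' => v vL priv; exists L, v; split => // F' F'S F'L.
case: (boolP (F' \in C)) => F'C.
  by apply: priv => //; rewrite inE F'S.
apply/negP=> vF'; move: F'C; rewrite inE ((subsetP sS) _ F'S) /= => /negP; apply.
apply: (connect_trans LC); apply: connect1.
apply/and3P; split => //; first exact: (subsetP sS) _ F'S.
apply/set0Pn; exists v; by rewrite inE vL.
Qed.

Lemma count_facets (S : {set {set T}}) :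
  (forall S', S' \subset S -> S' != set0 -> exists L v,
     [/\ L \in S', v \in L & forall F', F' \in S' -> F' != L -> v \notin F']) ->
  #|S| <= #|\bigcup_(F in S) F|.
Proof.
move: {2}#|S| (leqnn #|S|) => n; elim: n S => [|n IH] S.
  by rewrite leqn0 => /eqP->.
move=> Sn H.
case: (eqVneq S set0) => [->|Sne]; first by rewrite cards0.
have [L [v [LS vL priv]]] := H S (subxx _) Sne.
have S0n : #|S :\ L| <= n.
  by move: Sn; rewrite (cardsD1 L S) LS add1n ltnS.
have IH0 := IH (S :\ L) S0n (fun S' s ne => H S' (subset_trans s (subsetDl _ _)) ne).
rewrite (cardsD1 L S) LS add1n.
apply: (leq_ltn_trans IH0).
apply: proper_card; rewrite properEneq; apply/andP; split.
  apply/negP=> /eqP E.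
  have : v \in \bigcup_(F in S) F by apply/bigcupP; exists L.
  rewrite -E => /bigcupP[F']; rewrite !inE => /andP[F'L F'S].
  by rewrite (negbTE (priv F' F'S F'L)).
apply/subsetP=> x /bigcupP[F']; rewrite inE => /andP[_ F'S] xF'.
by apply/bigcupP; exists F'.
Qed.

End Aux.

Theorem lemma2p5 (T : finType) (D : {set {set T}}) (d : nat) :
  simplicial_complex D -> has_dim D d -> simplicial_forest D ->
  fvec D d <= fvec D 0.
Proof.
move=> sc [[F0 F0D F0c] dimb] forest.
have n0 : set0 \notin facets D.
  apply/negP; rewrite inE => /andP[_ /forallP m].
  have := m F0; rewrite F0D sub0set /= => /eqP E.
  by move: F0c; rewrite E cards0.
set S := [set F in D | #|F| == d.+1].
have sS : S \subset facets D.
  apply/subsetP=> F; rewrite !inE => /andP[FD /eqP Fc]; rewrite FD /=.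
  apply/forallP=> G; apply/implyP=> GD; apply/implyP=> FG.
  rewrite eq_sym eqEcard FG /= Fc; exact: dimb.
have := count_facets (fun S' s ne => private_vertex forest n0 (subset_trans s sS) ne).
move/leq_trans; apply.
rewrite /fvec -(card_imset _ (@set1_inj T)).
apply: subset_leq_card; apply/subsetP=> X /imsetP[v /bigcupP[F]].
rewrite inE => /andP[FD _] vF ->.
rewrite inE cards1 eqxx andbT; apply: (sc F) => //.
by rewrite sub1set.
Qed.
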